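(* Let $\mathcal{A}\in\mathbb{R}^{d_1\times\cdots\times d_k}$ be an order-$k$ real tensor and $\pi\in\mathcal{P}_{[k]}$. If $\mathcal{A}$ is $\pi$-OD, then for every partition $\tau$ in the upper cone $U_\pi=\{\tau\in\mathcal{P}_{[k]}:\ \pi\le\tau<\mathbf{1}_{[k]}\}$, \[ \|\mathrm{Unfold}_\tau(\mathcal{A})\|_\sigma=\|\mathrm{Unfold}_\pi(\mathcal{A})\|_\sigma . \]
   Context: $\mathcal{P}_{[k]}$ is the set of partitions of $[k]$, ordered by refinement ($\pi\le\tau$ if every block of $\pi$ lies in a block of $\tau$; $\tau<\mathbf{1}_{[k]}$ means $\tau\ne\{[k]\}$). $\mathcal{A}$ is $\pi$-orthogonal decomposable ($\pi$-OD) if $\mathcal{A}=\sum_{n=1}^r\lambda_n\mathbf{a}^{(n)}_1\otimes\cdots\otimes\mathbf{a}^{(n)}_k$ with $\lambda_1\ge\cdots\ge\lambda_r\ge0$, $\mathbf{a}^{(n)}_i\in\mathbb{R}^{d_i}$, and $\langle\otimes_{i\in B}\mathbf{a}^{(n)}_i,\otimes_{i\in B}\mathbf{a}^{(m)}_i\rangle=\delta_{nm}$ for all $B\in\pi$, $n,m\in[r]$. For a real tensor $\mathcal{T}\in\mathbb{R}^{e_1\times\cdots\times e_m}$, $\|\mathcal{T}\|_\sigma=\sup\{\sum t_{i_1\dots i_m}x^{(1)}_{i_1}\cdots x^{(m)}_{i_m}:\ \|\mathbf{x}_n\|_2=1\}$. Unfolding: for $\pi=\{B_1,\dots,B_\ell\}$,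 $\mathrm{Unfold}_\pi(\mathcal{A})$ is the order-$\ell$ tensor of dimensions $(\prod_{j\in B_1}d_j,\dots,\prod_{j\in B_\ell}d_j)$ whose entry at $(m_1,\dots,m_\ell)$ is $a_{i_1\dots i_k}$, where $m_j$ corresponds to $(i_r)_{r\in B_j}$ under a fixed bijection $\prod_{r\in B_j}[d_r]\to[\prod_{r\in B_j}d_r]$. *)

(* Defs.v *)
From HB Require Import structures.
From mathcomp Require Import all_boot all_order all_algebra.
From mathcomp Require Import reals.
Set Implicit Arguments. Unset Strict Implicit. Unset Printing Implicit Defensive.
Import Order.TTheory GRing.Theory Num.Theory.
Local Open Scope ring_scope.

Definition midx (k : nat) (d : 'I_k -> nat) := {dffun forall i : 'I_k, 'I_(d i)}.
Definition tensor (R : Type) (k : nat) (d : 'I_k -> nat) := midx d -> R.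

Definition bidx (k : nat) (d : 'I_k -> nat) (B : {set 'I_k}) :=
  {dffun forall j : {r : 'I_k | r \in B}, 'I_(d (val j))}.

Definition restr (k : nat) (d : 'I_k -> nat) (B : {set 'I_k}) (m : midx d)
  : bidx d B := [ffun j : {r : 'I_k | r \in B} => m (val j)].

Definition is_setpart (k : nat) (P : {set {set 'I_k}}) : bool :=
  partition P [set: 'I_k].
Definition refines (k : nat) (P Q : {set {set 'I_k}}) : Prop :=
  forall B, B \in P -> exists2 C, C \in Q & B \subset C.
Definition top_part (k : nat) : {set {set 'I_k}} := [set [set: 'I_k]].

Definition spec_norm (R : realType) (I : finType) (X : I -> finType)
  (T : {dffun forall i : I, X i} -> R) : R :=
  reals.sup (fun s : R => exists x : forall i : I, X i -> R,
     (forall i, \sum_(t : X i) (x i t) ^+ 2 = 1) /\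
     s = \sum_(t : {dffun forall i : I, X i}) T t * \prod_(i : I) x i (t i)).

Definition blocks (k : nat) (P : {set {set 'I_k}}) := {B : {set 'I_k} | B \in P}.

(* Unfold_P(A): the tensor whose modes are the blocks B of P, the index of the
   mode B being the tuple (i_r)_{r in B} (this is the canonical identification
   of prod_{r in B}[d_r] with [prod_{r in B} d_r]).  Its entry at (m_B)_B is
   A at the unique multi-index whose restriction to each block B is m_B
   (written as a sum over matching multi-indices, which has exactly one term
   when P is a partition of [k]). *)
Definition unfold (R : realType) (k : nat) (d : 'I_k -> nat)
  (P : {set {set 'I_k}}) (A : tensor R d)
  : {dffun forall b : blocks P, bidx d (val b)} -> R :=
  fun mb => \sum_(m : midx d | [forall b : blocks P, restr (val b) m == mb b]) A m.

Definition unfold_norm (R : realType) (k : nat) (d : 'I_k -> nat)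
  (P : {set {set 'I_k}}) (A : tensor R d) : R :=
  @spec_norm R (blocks P) (fun b => bidx d (val b)) (unfold A).

Definition piOD (R : realType) (k : nat) (d : 'I_k -> nat)
  (P : {set {set 'I_k}}) (A : tensor R d) : Prop :=
  exists (r : nat) (lam : 'I_r -> R) (a : 'I_r -> forall i : 'I_k, 'I_(d i) -> R),
    [/\ (forall n m : 'I_r, (n <= m)%N -> lam m <= lam n),
        (forall n, 0 <= lam n),
        (forall mi : midx d, A mi = \sum_(n < r) lam n * \prod_(i < k) a n i (mi i)) &
        (forall B, B \in P -> forall n m : 'I_r,
           \sum_(t : bidx d B)
             \prod_(j : {r0 : 'I_k | r0 \in B}) (a n (val j) (t j) * a m (val j) (t j))
           = (n == m)%:R)].

(* Main.v *)
Require Import Defs.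
From mathcomp Require Import all_boot all_order all_algebra.
From mathcomp Require Import reals.
From mathcomp Require Import ring lra.
From mathcomp Require classical_sets boolp.
Set Implicit Arguments. Unset Strict Implicit. Unset Printing Implicit Defensive.
Import Order.TTheory GRing.Theory Num.Theory.
Local Open Scope ring_scope.

Lemma distrD (R : comNzRingType) (I : finType) (X : I -> finType) (h : forall i, X i -> R) :
  \sum_(f : {dffun forall i : I, X i}) \prod_i h i (f i) = \prod_i \sum_(t : X i) h i t.
Proof.
under eq_bigr do rewrite (big_tag (fun i t => h i t)).
rewrite bigA_distr_big_dep.
have := @big_fprod R 0 1 *%R _ I X (fun i => [ffun t => h i t]).
move=> /(_ (GRing.Algebra_add__canonical__Monoid_AddLaw R)) E.
transitivity (\sum_(g in family (tagged_with X)) \prod_i untag 0 [ffun t => h i t] (g i)); last first.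
  apply: eq_bigr => g _; apply: eq_bigr => i _.
  by rewrite /untag; case: eqP => // e; rewrite ffunE.
rewrite -E.
rewrite (reindex (@fprod_of_dffun I X)); last first.
  by apply: onW_bij; apply: fprod_of_dffun_bij.
apply: eq_bigr => f _; apply: eq_bigr => i _.
by rewrite ffunE /fprod_of_dffun fprodE.
Qed.

Lemma sup_eqM (R : realType) (S : classical_sets.set R) (M : R) :
  (forall s, S s -> s <= M) -> S M -> reals.sup S = M.
Proof.
move=> ub SM; apply/le_anti/andP; split.
  by apply: ge_sup; [exists M | apply/classical_sets.ubP].
have : classical_sets.ubound S (reals.sup S).
  by apply: ub_le_sup; exists M; apply/classical_sets.ubP.
by move/classical_sets.ubP; apply.
Qed.

Section Part.
Context (k : nat) (d : 'I_k -> nat) (P : {set {set 'I_k}}) (hP : is_setpart P).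

Lemma covP (i : 'I_k) : i \in cover P.
Proof. by move: hP => /and3P[/eqP -> _ _]; rewrite in_setT. Qed.

Lemma trivP : trivIset P.
Proof. by move: hP => /and3P[]. Qed.

Definition blk (i : 'I_k) : blocks P := exist _ (pblock P i) (pblock_mem (covP i)).

Lemma memblk (i : 'I_k) : i \in val (blk i).
Proof. by rewrite /= mem_pblock covP. Qed.

Definition glue (mb : {dffun forall b : blocks P, bidx d (val b)}) : midx d :=
  [ffun i => (mb (blk i) (exist _ i (memblk i)) : 'I_(d i))].

Lemma mb_congr (mb : {dffun forall b : blocks P, bidx d (val b)}) (b b' : blocks P) i
  (p : i \in val b) (p' : i \in val b') : b = b' ->
  (mb b (exist _ i p) : 'I_(d i)) = mb b' (exist _ i p').
Proof. by move=> e; subst b'; rewrite (bool_irrelevance p p'). Qed.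

Lemma blk_eq (b : blocks P) i : i \in val b -> blk i = b.
Proof. by move=> ib; apply: val_inj => /=; apply: def_pblock (trivP) (valP b) ib. Qed.

Lemma restr_glue (mb : {dffun forall b : blocks P, bidx d (val b)}) b : restr (val b) (glue mb) = mb b.
Proof.
apply/ffunP => -[i ib]; rewrite !ffunE /=.
by apply: mb_congr; apply: blk_eq.
Qed.

Lemma glue_uniq (mb : {dffun forall b : blocks P, bidx d (val b)}) (m : midx d) : (forall b, restr (val b) m = mb b) -> m = glue mb.
Proof.
move=> H; apply/ffunP => i; rewrite ffunE.
by have /ffunP/(_ (exist _ i (memblk i))) := H (blk i); rewrite ffunE.
Qed.

Lemma glueE (mb : {dffun forall b : blocks P, bidx d (val b)}) (b : blocks P) (j : {r : 'I_k | r \in val b}) : glue mb (val j) = mb b j.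
Proof. by have /ffunP/(_ j) := restr_glue mb b; rewrite ffunE. Qed.

Lemma unfold_glue (R : realType) (A : tensor R d) (mb : {dffun forall b : blocks P, bidx d (val b)}) : @unfold R k d P A mb = A (glue mb).
Proof.
rewrite /unfold (big_pred1 (glue mb)) // => m /=.
apply/forallP/eqP => [H | ->]; last by move=> b; apply/eqP/restr_glue.
by apply: glue_uniq => b; apply/eqP/H.
Qed.

Lemma prod_part (R : comNzRingType) (F : 'I_k -> R) :
  \prod_i F i = \prod_(b : blocks P) \prod_(j : {r : 'I_k | r \in val b}) F (val j).
Proof.
have -> : \prod_i F i = \prod_(i in cover P) F i.
  by apply: eq_bigl => i; rewrite covP.
rewrite big_trivIset ?trivP // big_sub; apply: eq_bigr => b _.
by rewrite big_sub.
Qed.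

End Part.

Lemma part_set0 (k : nat) (P : {set {set 'I_k}}) : is_setpart P -> set0 \notin P.
Proof. by move=> /and3P[]. Qed.

Definition uu (R : realType) (k : nat) (d : 'I_k -> nat) (r : nat)
  (a : 'I_r -> forall i : 'I_k, 'I_(d i) -> R) (n : 'I_r) (B : {set 'I_k}) (t : bidx d B) : R :=
  \prod_(j : {r0 : 'I_k | r0 \in B}) a n (val j) (t j).

Lemma ortho_coarse (R : realType) (k : nat) (d : 'I_k -> nat) (r : nat)
  (a : 'I_r -> forall i : 'I_k, 'I_(d i) -> R) (pi P : {set {set 'I_k}}) :
  is_setpart pi -> is_setpart P -> refines pi P ->
  (forall B, B \in pi -> forall n m : 'I_r,
           \sum_(t : bidx d B)
             \prod_(j : {r0 : 'I_k | r0 \in B}) (a n (val j) (t j) * a m (val j) (t j))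
           = (n == m)%:R) ->
  forall C, C \in P -> forall n m : 'I_r,
    \sum_(t : bidx d C) uu a n t * uu a m t = (n == m)%:R.
Proof.
move=> hpi hP ref horth C CP n m.
pose S (j : 'I_k) := \sum_(s : 'I_(d j)) a n j s * a m j s.
have E1 : forall B : {set 'I_k}, \sum_(t : bidx d B)
             \prod_(j : {r0 : 'I_k | r0 \in B}) (a n (val j) (t j) * a m (val j) (t j))
          = \prod_(j in B) S j.
  move=> B; rewrite [RHS]big_sub.
  have := (distrD (fun (j : {r0 : 'I_k | r0 \in B}) (s : 'I_(d (val j))) => a n (val j) s * a m (val j) s)).
  by move=> H; apply: etrans H.
have -> : \sum_(t : bidx d C) uu a n t * uu a m t = \prod_(j in C) S j.
  rewrite -E1; apply: eq_bigr => t _; rewrite /uu -big_split //.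
pose Q := [set B in pi | B \subset C].
have trQ : trivIset Q.
  by apply: trivIsetS (trivP hpi); apply/subsetP => B; rewrite inE => /andP[].
have pbQ : forall j, j \in C -> pblock pi j \in Q.
  move=> j jC; rewrite inE pblock_mem ?covP //=.
  have [C' C'P sub] := ref _ (pblock_mem (covP hpi j)).
  have jC' : j \in C' by apply: (subsetP sub); rewrite mem_pblock covP.
  have e1 := def_pblock (trivP hP) CP jC.
  have e2 := def_pblock (trivP hP) C'P jC'.
  by rewrite -e1 e2.
have cQ : cover Q = C.
  apply/setP => j; apply/bigcupP/idP => [[B] | jC].
    by rewrite inE => /andP[_ /subsetP]; apply.
  by exists (pblock pi j); [apply: pbQ | rewrite mem_pblock covP].
rewrite -cQ big_trivIset //.
have -> : \prod_(B in Q) \prod_(j in B) S j = \prod_(B in Q) (n == m)%:R.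
  apply: eq_bigr => B; rewrite inE => /andP[Bpi _].
  by rewrite -E1 horth.
have : C != set0 by apply: contraNneq (part_set0 hP) => <-.
case/set0Pn => j0 j0C.
case: eqP => [_|_]; first by rewrite big1.
by rewrite (bigD1 (pblock pi j0)) ?pbQ //= mul0r.
Qed.

Lemma value_formula (R : realType) (k : nat) (d : 'I_k -> nat) (P : {set {set 'I_k}})
  (hP : is_setpart P) (A : tensor R d) (r : nat) (lam : 'I_r -> R)
  (a : 'I_r -> forall i : 'I_k, 'I_(d i) -> R)
  (hA : forall mi : midx d, A mi = \sum_(n < r) lam n * \prod_(i < k) a n i (mi i))
  (x : forall b : blocks P, bidx d (val b) -> R) :
  \sum_(t : {dffun forall b : blocks P, bidx d (val b)}) @unfold R k d P A t * \prod_b x b (t b)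
  = \sum_(n < r) lam n * \prod_(b : blocks P) \sum_(t : bidx d (val b)) uu a n t * x b t.
Proof.
have E : forall (t : {dffun forall b : blocks P, bidx d (val b)}),
    @unfold R k d P A t * \prod_b x b (t b) =
    \sum_(n < r) lam n * \prod_b (uu a n (t b) * x b (t b)).
  move=> t; rewrite (unfold_glue hP) hA big_distrl /=; apply: eq_bigr => n _.
  rewrite big_split /= mulrA; congr (_ * _ * _).
  rewrite (prod_part hP); apply: eq_bigr => b _; rewrite /uu.
  by apply: eq_bigr => j _; rewrite (glueE hP).
under eq_bigr do rewrite E.
rewrite exchange_big /=; apply: eq_bigr => n _.
rewrite -big_distrr /=; congr (_ * _).
have := distrD (fun (b : blocks P) (s : bidx d (val b)) => uu a n s * x b s).
by move=> H; apply: etrans H.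
Qed.

Lemma key_ineq (R : realFieldType) (l L p1 p2 p c1 c2 : R) : 0 <= l -> l <= L -> 0 <= p1 -> 0 <= p2 -> 0 <= p -> p <= 1 -> p1^+2 = c1^+2 -> p2^+2 = c2^+2 ->
  l * (p1 * (p2 * p)) <= L * ((c1^+2 + c2^+2)/2).
Proof.
move=> l0 lL p10 p20 p0 p1' e1 e2.
have q0 : 0 <= p1 * p2 by apply: mulr_ge0.
have h1 : 2 * (p1 * p2) <= c1^+2 + c2^+2.
  rewrite -e1 -e2; have := sqr_ge0 (p1 - p2); rewrite !expr2; lra.
have h2 : p1 * (p2 * p) <= p1 * p2 by rewrite mulrA; nra.
have h3 : 0 <= p1 * (p2 * p) by rewrite mulrA; nra.
have h4 : l * (p1 * (p2 * p)) <= L * (p1 * p2) by nra.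
nra.
Qed.

Lemma bessel (R : realFieldType) (X : finType) (r : nat) (u : 'I_r -> X -> R) (x : X -> R) :
  (forall n m, \sum_t u n t * u m t = (n == m)%:R) -> \sum_t x t ^+ 2 = 1 ->
  \sum_n (\sum_t u n t * x t) ^+ 2 <= 1.
Proof.
move=> horth hx.
pose c n := \sum_t u n t * x t.
pose s t := \sum_n c n * u n t.
have h1 : \sum_t x t * s t = \sum_n c n ^+ 2.
  under eq_bigr do rewrite /s big_distrr.
  rewrite exchange_big; apply: eq_bigr => n _ /=.
  rewrite expr2 [X in _ * X]/c big_distrr; apply: eq_bigr => t _ /=; rewrite /c; ring.
have h2 : \sum_t s t ^+ 2 = \sum_n c n ^+ 2.
  under eq_bigr do rewrite /s expr2 big_distrlr /=.
  rewrite exchange_big; apply: eq_bigr => n _ /=; rewrite exchange_big /=.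
  transitivity (\sum_m c n * c m * (n == m)%:R).
    apply: eq_bigr => m _; rewrite -horth big_distrr; apply: eq_bigr => t _ /=; ring.
  rewrite (bigD1 n) //= eqxx mulr1 big1 ?addr0 ?expr2 // => m.
  by rewrite eq_sym => /negbTE ->; rewrite mulr0.
have h0 : 0 <= \sum_t (x t - s t) ^+ 2 by apply: sumr_ge0 => t _; apply: sqr_ge0.
have e : \sum_t (x t - s t) ^+ 2 = \sum_t x t ^+ 2 - 2 * \sum_t x t * s t + \sum_t s t ^+ 2.
  rewrite mulr_sumr -sumrB -big_split; apply: eq_bigr => t _ /=; ring.
rewrite -/c; move: h0; rewrite e h1 h2 hx; lra.
Qed.

Lemma main_bound (R : realFieldType) (I : finType) (r : nat) (lam : 'I_r.+1 -> R)
  (c : 'I_r.+1 -> I -> R) (b1 b2 : I) :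
  b1 != b2 -> (forall n, lam n <= lam ord0) -> (forall n, 0 <= lam n) ->
  (forall b, \sum_n c n b ^+ 2 <= 1) ->
  \sum_n lam n * \prod_b c n b <= lam ord0.
Proof.
move=> b12 hl hl0 hc.
have csq : forall n b, c n b ^+ 2 <= 1.
  move=> n b; apply: le_trans (hc b); rewrite (bigD1 n) //= lerDl.
  by apply: sumr_ge0 => m _; apply: sqr_ge0.
have cle1 : forall n b, `|c n b| <= 1.
  move=> n b; have := csq n b; rewrite -real_normK ?num_real //.
  have := normr_ge0 (c n b); set y := `|c n b|; move=> y0 h; nra.
apply: le_trans (_ : \sum_n lam ord0 * ((c n b1 ^+ 2 + c n b2 ^+ 2) / 2) <= _).
  apply: ler_sum => n _.
  apply: le_trans (_ : lam n * `|\prod_b c n b| <= _).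
    by apply: ler_wpM2l => //; apply: real_ler_norm; apply: num_real.
  rewrite normr_prod (bigD1 b1) //= (bigD1 b2) /=; last by rewrite eq_sym b12.
  apply: key_ineq => //; rewrite ?normr_ge0 ?real_normK ?num_real //.
    by apply: prodr_ge0 => b _; apply: normr_ge0.
  by apply: prodr_ile1 => b _; rewrite normr_ge0 cle1.
rewrite -mulr_sumr -mulr_suml big_split /=.
have := hc b1; have := hc b2; have := hl0 ord0; nra.
Qed.

Lemma sup_zero (R : realType) (S : classical_sets.set R) :
  (forall s, S s -> s = 0) -> reals.sup S = 0.
Proof.
move=> H; case: (boolp.pselect (S 0)) => [S0|nS0].
  by apply: sup_eqM => // s /H ->.
have -> : S = classical_sets.set0.
  apply: boolp.funext => s; apply: boolp.propext; split=> // Ss.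
  by apply: nS0; rewrite -(H s Ss).
exact: sup0.
Qed.

Lemma top_of_setT (k : nat) (P : {set {set 'I_k}}) :
  is_setpart P -> [set: 'I_k] \in P -> P = top_part k.
Proof.
move=> hP TP; apply/setP => B; rewrite /top_part in_set1.
apply/idP/eqP => [BP | ->//].
have : B != set0 by apply: contraNneq (part_set0 hP) => <-.
case/set0Pn => j jB.
by rewrite -(def_pblock (trivP hP) BP jB) (def_pblock (trivP hP) TP (in_setT j)).
Qed.

Lemma two_blocks (k : nat) (P : {set {set 'I_k}}) (i : 'I_k) :
  is_setpart P -> P != top_part k -> exists b1 b2 : blocks P, b1 != b2.
Proof.
move=> hP ntop.
have B1P := pblock_mem (covP hP i).
have : ~~ ([set: 'I_k] \subset pblock P i).
  rewrite subTset; apply: contraNneq ntop => e; apply/eqP.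
  by apply: top_of_setT => //; rewrite -e.
case/subsetPn => j _ jn.
exists (exist (fun B => B \in P) _ B1P), (exist (fun B => B \in P) _ (pblock_mem (covP hP j))).
apply/negP => /eqP /(congr1 val) /= e.
by move: jn; rewrite e mem_pblock covP.
Qed.

Lemma norm_zero (R : realType) (k : nat) (d : 'I_k -> nat) (A : tensor R d)
  (P : {set {set 'I_k}}) : (forall mi, A mi = 0) -> unfold_norm P A = 0.
Proof.
move=> hA; rewrite /unfold_norm /spec_norm; apply: sup_zero => s [x [_ ->]].
apply: big1 => t _; rewrite /unfold big1 ?mul0r // => m _; exact: hA.
Qed.

Lemma norm_pos (R : realType) (k : nat) (d : 'I_k -> nat) (A : tensor R d)
  (pi P : {set {set 'I_k}}) (r : nat) (lam : 'I_r.+1 -> R)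
  (a : 'I_r.+1 -> forall i : 'I_k, 'I_(d i) -> R) :
  is_setpart pi -> is_setpart P -> refines pi P -> (exists b1 b2 : blocks P, b1 != b2) ->
  (forall n m : 'I_r.+1, (n <= m)%N -> lam m <= lam n) -> (forall n, 0 <= lam n) ->
  (forall mi : midx d, A mi = \sum_(n < r.+1) lam n * \prod_(i < k) a n i (mi i)) ->
  (forall B, B \in pi -> forall n m : 'I_r.+1,
           \sum_(t : bidx d B)
             \prod_(j : {r0 : 'I_k | r0 \in B}) (a n (val j) (t j) * a m (val j) (t j))
           = (n == m)%:R) ->
  unfold_norm P A = lam ord0.
Proof.
move=> hpi hP ref [b1 [b2 b12]] hdec hpos hA horth.
have ortho := ortho_coarse hpi hP ref horth.
rewrite /unfold_norm /spec_norm; apply: sup_eqM.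
  move=> s [x [hx ->]]; rewrite (value_formula hP hA).
  apply: (main_bound (c := fun n b => \sum_(t : bidx d (val b)) uu a n t * x b t) b12).
  - by move=> n; apply: hdec.
  - exact: hpos.
  - move=> b; apply: bessel; last exact: hx.
    by move=> n m; apply: ortho; apply: (valP b).
exists (fun b t => uu a ord0 t); split.
  move=> b; under eq_bigr do rewrite expr2.
  by rewrite (ortho _ (valP b)) eqxx.
symmetry; apply: etrans (value_formula hP hA (fun b (t : bidx d (val b)) => uu a ord0 t)) _.
under eq_bigr do under eq_bigr do rewrite (ortho _ (valP _)).
rewrite (bigD1 ord0) //= big1_eq mulr1 big1 ?addr0 //.
move=> n n0; rewrite (bigD1 b1) //= (negbTE n0) mul0r mulr0 //.
Qed.

Lemma part0 (k : nat) (P : {set {set 'I_k}}) : k = 0%N -> is_setpart P -> P = set0.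
Proof.
move=> k0 hP; apply/setP => B; rewrite in_set0; apply/negP => BP.
have eB : B = set0 by apply/setP => i; exfalso; case: i; rewrite k0.
by move: (part_set0 hP); rewrite -eB BP.
Qed.

Theorem theorem5p5 (R : realType) (k : nat) (d : 'I_k -> nat)
  (A : tensor R d) (pi : {set {set 'I_k}}) :
  is_setpart pi -> piOD pi A ->
  forall tau : {set {set 'I_k}},
    is_setpart tau -> refines pi tau -> tau != top_part k ->
    unfold_norm tau A = unfold_norm pi A.
Proof.
move=> hpi [r [lam [a [hdec hpos hA horth]]]] tau htau ref ntop.
case: r lam a hdec hpos hA horth => [|r] lam a hdec hpos hA horth.
  have hA0 : forall mi, A mi = 0 by move=> mi; rewrite hA big_ord0.
  by rewrite !norm_zero.
case: (posnP k) => [k0 | kpos].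
  by rewrite (part0 k0 hpi) (part0 k0 htau).
pose i := Ordinal kpos.
rewrite (norm_pos hpi htau ref (two_blocks i htau ntop) hdec hpos hA horth).
have refpi : refines pi pi by move=> B BP; exists B.
have npi : pi != top_part k.
  apply: contraNneq ntop => e; apply/eqP; apply: top_of_setT => //.
  have : [set: 'I_k] \in pi by rewrite e /top_part in_set1.
  case/ref => C CP; rewrite subTset => /eqP <-; exact: CP.
by rewrite (norm_pos hpi hpi refpi (two_blocks i hpi npi) hdec hpos hA horth).
Qed.
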